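(* Let $\Omega\subset\mathbb{R}^2$ be a bounded domain with area $S_\Omega$, and let $\lambda>0$, $\beta>0$, $\eta>0$. Let $$\mathcal{X}=\mathcal{W}^{1,\infty}_\eta=\{\mu\in W^{1,\infty}(\Omega)\ :\ \|\nabla\mu\|_{L^\infty}<\eta\},$$ equipped with the norm $\|\mu\|_{\mathcal{X}}^2=\int_\Omega\big(|\partial_1\mu|^2+|\partial_2\mu|^2+|\mu|^2\big)\,dx_1dx_2$. Define $\mathrm{R}:\mathcal{X}\to\mathbb{R}$ by $$\mathrm{R}(\mu)=\lambda\int_\Omega\Big(\big|p_1(\mu)\,\partial_1\mu\big|+\big|p_2(\mu)\,\partial_2\mu\big|\Big)\,dx_1dx_2,\qquad p_i(\mu)=\frac{1}{|\partial_i\mu|^2+\beta},\ i=1,2.$$ Then: (1) $\mathrm{R}$ is bounded from below on $\mathcal{X}$ (indeed $\mathrm{R}(\mu)\ge 0$ for all $\mu\in\mathcal{X}$); (2) for every $\delta>0$ there exists $M=M(\delta)>0$ such that $\mathrm{R}(\mu)\le M$ for all $\mu\in\mathcal{X}$ with $\|\mu\|_{\mathcal{X}}\le\delta$; (3) for every $\delta>0$ there exists $L=L(\delta)>0$ such that $|\mathrm{R}(\mu_1)-\mathrm{R}(\mu_2)|\le L\|\mu_1-\mu_2\|_{\mathcal{X}}$ for all $\mu_1,\mu_2\in\mathcal{X}$ with $\max\{\|\mu_1\|_{\mathcal{X}},\|\mu_2\|_{\mathcal{X}}\}\le\delta$.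
   Context: $\partial_1,\partial_2$ denote the first-order (weak) partial derivatives in the $x_1$ and $x_2$ directions and $\nabla=(\partial_1,\partial_2)$. The functional $\mathrm{R}$ is the nonlinear weighted anisotropic total variation with weights $p=(p_1(\mu),p_2(\mu))$ depending on $\mu$ itself. *)

(* Defs.v *)
From HB Require Import structures.
From mathcomp Require Import all_boot all_order all_algebra.
From mathcomp Require Import all_classical all_reals all_analysis.
Set Implicit Arguments. Unset Strict Implicit. Unset Printing Implicit Defensive.
Import Order.TTheory GRing.Theory Num.Theory.
Import numFieldNormedType.Exports.
Local Open Scope classical_set_scope.
Local Open Scope ring_scope.

Definition leb2 (R : realType) := ((@lebesgue_measure R) \x (@lebesgue_measure R))%E.
Arguments leb2 R : clear implicits.

(* Unit coordinate directions e_1 = (1,0), e_2 = (0,1); [true] codes x_1. *)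
Definition dir (R : realType) (b : bool) : R * R :=
  if b then (1, 0) else (0, 1).

Definition pder (R : realType) (b : bool) (phi : R * R -> R) : R * R -> R :=
  fun x => 'D_(dir R b) phi x.

Definition smooth2 (R : realType) (phi : R * R -> R) : Prop :=
  forall s : seq bool,
    let g := foldr (@pder R) phi s in
    continuous g /\ (forall (b : bool) (x : R * R), derivable g x (dir R b)).

Definition test_fun (R : realType) (Omega : set (R * R)) (phi : R * R -> R) : Prop :=
  smooth2 phi /\
  exists K : set (R * R), [/\ compact K, K `<=` Omega &
                            forall x, ~ K x -> phi x = 0].

Definition weak_pder (R : realType) (Omega : set (R * R)) (b : bool)
    (mu g : R * R -> R) : Prop :=
  forall phi, test_fun Omega phi ->
    (\int[leb2 R]_(x in Omega) (mu x * pder b phi x)%:E =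
     - \int[leb2 R]_(x in Omega) (g x * phi x)%:E)%E.

Definition Linfty (R : realType) (Omega : set (R * R)) (f : R * R -> R) : Prop :=
  measurable_fun Omega f /\
  exists c : R, {ae leb2 R, forall x, Omega x -> `|f x| <= c}.

(* mu in W^{1,infty}_eta(Omega), with g1, g2 its weak partial derivatives
   d_1 mu, d_2 mu; ||grad mu||_{L^infty} < eta, where |grad mu| is the
   Euclidean norm sqrt(g1^2+g2^2) and "ess sup < eta" is written out as
   "some c < eta bounds |grad mu| almost everywhere on Omega". *)
Definition in_X (R : realType) (Omega : set (R * R)) (eta : R)
    (mu g1 g2 : R * R -> R) : Prop :=
  [/\ Linfty Omega mu, Linfty Omega g1 /\ Linfty Omega g2,
      weak_pder Omega true mu g1, weak_pder Omega false mu g2 &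
      (exists2 c : R, c < eta &
        {ae leb2 R, forall x, Omega x -> Num.sqrt (g1 x ^+ 2 + g2 x ^+ 2) <= c})].

Definition normX (R : realType) (Omega : set (R * R))
    (mu g1 g2 : R * R -> R) : R :=
  Num.sqrt (fine (\int[leb2 R]_(x in Omega)
                    (`|g1 x| ^+ 2 + `|g2 x| ^+ 2 + `|mu x| ^+ 2)%:E)%E).

Definition pw (R : realType) (beta : R) (g : R * R -> R) : R * R -> R :=
  fun x => 1 / (`|g x| ^+ 2 + beta).

Definition Rfun (R : realType) (Omega : set (R * R)) (lambda beta : R)
    (g1 g2 : R * R -> R) : R :=
  lambda * fine (\int[leb2 R]_(x in Omega)
                   (`|pw beta g1 x * g1 x| + `|pw beta g2 x * g2 x|)%:E)%E.

(* Main.v *)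
Require Import Defs.
From HB Require Import structures.
From mathcomp Require Import all_boot all_order all_algebra.
From mathcomp Require Import all_classical all_reals all_analysis.
From mathcomp Require Import lra ring.
Import Order.TTheory GRing.Theory Num.Theory.
Import numFieldNormedType.Exports.
Local Open Scope classical_set_scope.
Local Open Scope ring_scope.
Section S0.
Variable R : realType.



Definition boxq (q : rat * rat * rat) : set (R * R) :=
  `](ratr q.1.1 - ratr q.2), (ratr q.1.1 + ratr q.2)[%classic `*`
  `](ratr q.1.2 - ratr q.2), (ratr q.1.2 + ratr q.2)[%classic.

Definition Bn (O : set (R * R)) (n : nat) : set (R * R) :=
  match unpickle n with
  | Some q => if pselect (boxq q `<=` O) then boxq q else set0
  | None => set0
  end.

Lemma Bn_meas O n : @measurable _ (measurableTypeR R * measurableTypeR R)%type (Bn O n).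
Proof.
rewrite /Bn.
case: (unpickle n) => [q|]; last exact: measurable0.
case: (pselect (boxq q `<=` O)) => H; last exact: measurable0.
exact: (measurableX (measurable_itv _) (measurable_itv _)).
Qed.

Lemma cover O : open O -> O `<=` \bigcup_(n in setT) Bn O n.
Proof.
move=> oO x Ox.
have : nbhs x O by apply: oO.
move=> /nbhs_ballP [e /= e0 Be].
have e20 : 0 < e / 4 by rewrite divr_gt0.
have [r] := rat_in_itvoo e20.
rewrite in_itv /= => /andP[r0 re].
have [a] : exists q : rat, ratr q \in `]x.1 - ratr r, x.1 + ratr r[.
  apply: rat_in_itvoo. lra.
rewrite in_itv /= => /andP[a1 a2].
have [b] : exists q : rat, ratr q \in `]x.2 - ratr r, x.2 + ratr r[.
  apply: rat_in_itvoo; lra.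
rewrite in_itv /= => /andP[b1 b2].
exists (pickle (a, b, r)); first by [].
have sub : boxq (a, b, r) `<=` O.
  move=> y [/= y1 y2]; apply: Be.
  move: y1 y2; rewrite !in_itv /= => /andP[y11 y12] /andP[y21 y22].
  split => /=; rewrite /ball /= ltr_norml; apply/andP; split; lra.
rewrite /Bn pickleK; case: (pselect (boxq (a, b, r) `<=` O)) => H; last by [].
by split => /=; rewrite in_itv /=; apply/andP; split; lra.
Qed.

Lemma open_meas2 (O : set (R * R)) : open O ->
  @measurable _ (measurableTypeR R * measurableTypeR R)%type O.
Proof.
move=> oO.
have -> : O = \bigcup_(n in setT) Bn O n.
  apply/seteqP; split; first exact: cover.
  move=> x [n _]; rewrite /Bn; case: (unpickle n) => [q|]; last by [].
  by case: (pselect (boxq q `<=` O)) => // H /H.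
by apply: bigcup_measurable => n _; exact: Bn_meas.
Qed.

End S0.

Section S1.
Variable R : realType.


Lemma bdd_fin (O : set (R * R)) :
  @measurable _ (measurableTypeR R * measurableTypeR R)%type O ->
  bounded_set O -> (leb2 R O < +oo)%E.
Proof.
move=> mO [M [_ HM]].
have HO : forall y, O y -> `|y| <= `|M| + 1.
  by apply: HM; rewrite (le_lt_trans (ler_norm M)) // ltrDl.
set c := `|M| + 1.
have sub : O `<=` (`[-c, c]%classic `*` `[-c, c]%classic).
  move=> y Oy; have := HO _ Oy; rewrite prod_normE ge_max => /andP[h1 h2].
  by split; rewrite /= in_itv /= -ler_norml.
have mB : @measurable _ (measurableTypeR R * measurableTypeR R)%type
   (`[-c, c]%classic `*` `[-c, c]%classic).
  exact: (measurableX (measurable_itv _) (measurable_itv _)).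
apply: (le_lt_trans (le_measure (leb2 R) _ _ sub)); rewrite ?inE //.
rewrite /leb2.
have E := @product_measure1E _ _ (measurableTypeR R) (measurableTypeR R) R
  lebesgue_measure lebesgue_measure `[-c, c]%classic `[-c, c]%classic (measurable_itv _) (measurable_itv _).
have H : (@lebesgue_measure R `[(-c)%R, c]%classic * @lebesgue_measure R `[(-c)%R, c]%classic < +oo)%E.
  rewrite lebesgue_measure_itv /=. case: ifP => _; rewrite ?mul0e ?ltry // -EFinD -EFinM ltry //.
move: H; rewrite -E; exact.
Qed.

End S1.

Section S2.
Variable R : realType.


Implicit Types (O : set (R * R)) (f g : R * R -> R).
Let aeF : Filter (nbhs (almost_everywhere (leb2 R))) := ae_filter_ringOfSetsType (leb2 R).
#[local] Existing Instance aeF.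
Local Notation T2 := (measurableTypeR R * measurableTypeR R)%type.

Lemma LinftyB O f g : Linfty O f -> Linfty O g -> Linfty O (f \- g).
Proof.
move=> [mf [c hc]] [mg [k hk]]; split; first exact: measurable_realfun.measurable_funB.
exists (c + k); apply: filterS2 hc hk => x h1 h2 Ox.
by rewrite (le_trans (ler_normB _ _)) // lerD // ?h1 ?h2.
Qed.

Lemma LinftyD O f g : Linfty O f -> Linfty O g -> Linfty O (f \+ g).
Proof.
move=> [mf [c hc]] [mg [k hk]]; split; first exact: measurable_realfun.measurable_funD.
exists (c + k); apply: filterS2 hc hk => x h1 h2 Ox.
by rewrite (le_trans (ler_normD _ _)) // lerD // ?h1 ?h2.
Qed.

Lemma LinftyM O f g : Linfty O f -> Linfty O g -> Linfty O (f \* g).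
Proof.
move=> [mf [c hc]] [mg [k hk]]; split; first exact: measurable_realfun.measurable_funM.
exists (c * k); apply: filterS2 hc hk => x h1 h2 Ox.
by rewrite /= normrM; apply: ler_pM => //; [exact: h1|exact: h2].
Qed.

Lemma Linfty_norm O f : Linfty O f -> Linfty O (fun x => `|f x|).
Proof.
move=> [mf [c hc]]; split.
  exact: (measurableT_comp (@measurable_realfun.normr_measurable R setT) mf).
exists c; apply: filterS hc => x h1 Ox.
by rewrite normr_id h1.
Qed.

Lemma Linfty_sq O f : Linfty O f -> Linfty O (fun x => `|f x| ^+ 2).
Proof.
move=> /Linfty_norm [mf [c hc]]; split; first exact: measurable_realfun.measurable_funX.
exists (c ^+ 2); apply: filterS hc => x h1 Ox.
rewrite normrX normr_id lerXn2r // ?nnegrE //.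
  by rewrite (le_trans _ (h1 Ox)).
by rewrite -[X in X <= _]normr_id h1.
Qed.

Lemma Linfty_bdd O f c : measurable_fun O f -> (forall x, `|f x| <= c) ->
  Linfty O f.
Proof. by move=> mf hc; split => //; exists c; apply: aeW => x _. Qed.

Lemma Linfty_cst O k : Linfty O (fun _ => k).
Proof. by apply: (@Linfty_bdd O _ `|k|) => //; exact: measurable_cst. Qed.

Lemma Linfty_int O f :
  @measurable _ (measurableTypeR R * measurableTypeR R)%type O ->
  (leb2 R O < +oo)%E -> Linfty O f -> (leb2 R).-integrable O (EFin \o f).
Proof.
move=> mO fO [mf [c hc]]; apply/integrableP; split.
  by apply/measurable_realfun.measurable_EFinP; exact: mf.
apply: (@le_lt_trans _ _ ((`|c|)%:E * leb2 R O)%E); last by rewrite lte_mul_pinfty.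
apply: integral_le_bound => //.
- by apply/measurable_realfun.measurable_EFinP; exact: mf.
- apply: filterS hc => x h Ox /=; rewrite lee_fin.
  by rewrite (le_trans (h Ox)) // ler_norm.
Qed.

End S2.

Section S3.
Variable R : realType.



Definition phi (beta : R) (t : R) := `|1 / (`|t| ^+ 2 + beta) * t|.

Lemma phi_cont beta : 0 < beta -> continuous (phi beta).
Proof.
move=> b0 t.
have nz : `|t| ^+ 2 + beta != 0 by rewrite gt_eqF // ltr_wpDl // sqr_ge0.
apply: cvg_norm; apply: cvgM; last exact: cvg_id.
apply: cvgM; first exact: cvg_cst.
apply: cvgV => //.
apply: cvgD; last exact: cvg_cst.
rewrite expr2; apply: cvgM; apply: cvg_norm; exact: cvg_id.
Qed.

Lemma phi_bound beta t : 0 < beta -> `|phi beta t| <= 1 + beta^-1.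
Proof.
move=> b0; rewrite /phi normr_id normrM mul1r normfV.
have a0 : 0 <= `|t| := normr_ge0 t.
have D0 : 0 < `|t| ^+ 2 + beta by rewrite ltr_wpDl // sqr_ge0.
rewrite (ger0_norm (ltW D0)) mulrC ler_pdivrMr //.
have ib0 : 0 < beta^-1 by rewrite invr_gt0.
have bib : beta * beta^-1 = 1 by rewrite mulfV // gt_eqF.
set a := `|t| in a0 D0 *; set ib := beta^-1 in ib0 bib *.
have h1 := sqr_ge0 (a - 1).
have h2 := mulr_ge0 (ltW ib0) (sqr_ge0 a).
rewrite mulrDl mul1r mulrDr [ib * beta]mulrC bib.
nra.
Qed.

Lemma phi_lip beta s t : 0 < beta ->
  `|phi beta s - phi beta t| <= beta^-1 * `|s - t|.
Proof.
move=> b0; rewrite /phi; apply: (le_trans (ler_dist_dist _ _)).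
rewrite !real_normK ?num_real //.
have A0 : 0 < s ^+ 2 + beta by rewrite ltr_wpDl // sqr_ge0.
have B0 : 0 < t ^+ 2 + beta by rewrite ltr_wpDl // sqr_ge0.
have -> : 1 / (s ^+ 2 + beta) * s - 1 / (t ^+ 2 + beta) * t =
  (s - t) * (beta - s * t) / ((s ^+ 2 + beta) * (t ^+ 2 + beta)).
  by field; rewrite ?gt_eqF.
have AB0 : 0 < (s ^+ 2 + beta) * (t ^+ 2 + beta) by rewrite mulr_gt0.
rewrite normrM normfV (gtr0_norm AB0) normrM.
have hm : `|beta - s * t| <= beta^-1 * ((s ^+ 2 + beta) * (t ^+ 2 + beta)).
  rewrite -(ler_pM2l b0) mulrA mulfV ?gt_eqF // mul1r.
  have h1 := sqr_ge0 (s + t); have h2 := sqr_ge0 (s - t).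
  have h3 := sqr_ge0 (s * t).
  rewrite -[X in X * _ <= _](gtr0_norm b0) -normrM.
  apply/ler_normlP; split; nra.
rewrite ler_pdivrMr // [beta^-1 * _]mulrC -mulrA ler_wpM2l //.
Qed.

Lemma amgm (t x y z : R) : 0 < t ->
  `|x| + `|y| <= t * (`|x| ^+ 2 + `|y| ^+ 2 + `|z| ^+ 2) + t^-1.
Proof.
move=> t0.
have ti : t * t^-1 = 1 by rewrite mulfV // gt_eqF.
have ti0 : 0 < t^-1 by rewrite invr_gt0.
have a0 := normr_ge0 x; have b0 := normr_ge0 y; have c0 := normr_ge0 z.
set a := `|x| in a0 *; set b := `|y| in b0 *; set c := `|z| in c0 *.
have ha : t^-1 * (t * a - 1/2) ^+ 2 = t * a ^+ 2 - a + t^-1 / 4.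
  by field; rewrite gt_eqF.
have hb : t^-1 * (t * b - 1/2) ^+ 2 = t * b ^+ 2 - b + t^-1 / 4.
  by field; rewrite gt_eqF.
have ga := mulr_ge0 (ltW ti0) (sqr_ge0 (t * a - 1/2)).
have gb := mulr_ge0 (ltW ti0) (sqr_ge0 (t * b - 1/2)).
have gc := mulr_ge0 (ltW t0) (sqr_ge0 c).
rewrite ha in ga; rewrite hb in gb.
set it := t^-1 in ti ti0 ga gb *.
rewrite !mulrDr; lra.
Qed.

Lemma key (u v A : R) : 0 <= u -> 0 < v ->
  (forall t, 0 < t -> A <= t * u ^+ 2 + v ^+ 2 / t) -> A <= 2 * u * v.
Proof.
move=> u0 v0 H.
have [u0'|] := ltP 0 u.
  have := H (v / u) (divr_gt0 v0 u0').
  have -> : v / u * u ^+ 2 + v ^+ 2 / (v / u) = 2 * u * v.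
    by field; rewrite ?gt_eqF.
  done.
rewrite le_eqVlt ltNge u0 orbF => /eqP u0e; subst u.
rewrite mulr0 mul0r.
rewrite leNgt; apply/negP => A0.
have tp : 0 < 2 * v ^+ 2 / A by rewrite divr_gt0 // mulr_gt0 // exprn_gt0.
have := H _ tp.
have -> : 2 * v ^+ 2 / A * 0 ^+ 2 + v ^+ 2 / (2 * v ^+ 2 / A) = A / 2.
  by field; rewrite ?gt_eqF.
lra.
Qed.

End S3.

Arguments open_meas2 {R O}.
Arguments bdd_fin {R O}.
Arguments LinftyB {R O f g}.
Arguments LinftyD {R O f g}.
Arguments LinftyM {R O f g}.
Arguments Linfty_norm {R O f}.
Arguments Linfty_sq {R O f}.
Arguments Linfty_bdd {R}.
Arguments Linfty_cst {R}.
Arguments Linfty_int {R O f}.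
Arguments phi {R}.
Arguments phi_cont {R beta}.
Arguments phi_bound {R beta}.
Arguments phi_lip {R beta}.
Arguments amgm {R}.
Arguments key {R}.

Theorem lemma1 (R : realType) (Omega : set (R * R)) (lambda beta eta : R) :
  open Omega -> connected Omega -> bounded_set Omega -> Omega !=set0 ->
  0 < lambda -> 0 < beta -> 0 < eta ->
  [/\ (* (1) R >= 0 on X, hence bounded below *)
      (forall mu g1 g2, in_X Omega eta mu g1 g2 ->
         0 <= Rfun Omega lambda beta g1 g2),
      (* (2) bounded on bounded sets of X *)
      (forall delta : R, 0 < delta -> exists2 M : R, 0 < M &
         forall mu g1 g2, in_X Omega eta mu g1 g2 ->
           normX Omega mu g1 g2 <= delta ->
           Rfun Omega lambda beta g1 g2 <= M) &
      (* (3) Lipschitz on bounded sets of X *)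
      (forall delta : R, 0 < delta -> exists2 L : R, 0 < L &
         forall mu1 g1 g2 mu2 h1 h2,
           in_X Omega eta mu1 g1 g2 -> in_X Omega eta mu2 h1 h2 ->
           Num.max (normX Omega mu1 g1 g2) (normX Omega mu2 h1 h2) <= delta ->
           `|Rfun Omega lambda beta g1 g2 - Rfun Omega lambda beta h1 h2|
             <= L * normX Omega (mu1 \- mu2) (g1 \- h1) (g2 \- h2))].
Proof.
move=> oO _ bO _ l0 b0 _.
have mO := open_meas2 oO.
have fO := bdd_fin mO bO.
set S := fine (leb2 R Omega).
have S0 : 0 <= S by rewrite fine_ge0 // measure_ge0.
have RE : forall g1 g2, Rfun Omega lambda beta g1 g2 =
    lambda * Rintegral (leb2 R) Omega (fun x => phi beta (g1 x) + phi beta (g2 x)).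
  by [].
have Lphi : forall g, Linfty Omega g -> Linfty Omega (fun x => phi beta (g x)).
  move=> g [mg _]; apply: (@Linfty_bdd _ _ _ (1 + beta^-1)); last first.
    by move=> x; exact: phi_bound.
  exact: (measurableT_comp (measurable_realfun.continuous_measurable_fun (phi_cont b0)) mg).
have Int : forall f, Linfty Omega f -> (leb2 R).-integrable Omega (EFin \o f).
  by move=> f; exact: Linfty_int.
split.
- move=> mu g1 g2 _; rewrite RE; apply: mulr_ge0; first exact: ltW.
  by apply: Rintegral_ge0 => x _; apply: addr_ge0; exact: normr_ge0.
- move=> delta _; exists (lambda * (2 * (1 + beta^-1) * S) + 1).
    have hK : 0 <= 2 * (1 + beta^-1) * S.
      by apply: mulr_ge0 => //; apply: mulr_ge0 => //; apply: addr_ge0 => //; rewrite invr_ge0 ltW.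
    by apply: (lt_le_trans ltr01); rewrite lerDr mulr_ge0 // ltW.
  move=> mu g1 g2 [_ [Lg1 Lg2] _ _ _] _.
  rewrite RE -[X in X <= _]addr0; apply: lerD => //; rewrite ler_pM2l //.
  rewrite -Rintegral_cst //; apply: le_Rintegral => //.
  + exact: (Int _ (LinftyD (Lphi _ Lg1) (Lphi _ Lg2))).
  + exact: (Int _ (Linfty_cst _ _)).
  + move=> x _; have := phi_bound (g1 x) b0; have := phi_bound (g2 x) b0.
    have := ler_norm (phi beta (g1 x)); have := ler_norm (phi beta (g2 x)).
    lra.
- move=> delta _; exists (lambda * beta^-1 * (2 * Num.sqrt (S + 1)) + 1).
    have hK : 0 <= lambda * beta^-1 * (2 * Num.sqrt (S + 1)).
      by apply: mulr_ge0; [apply: mulr_ge0; [exact: ltW|rewrite invr_ge0 ltW]|apply: mulr_ge0 => //; exact: sqrtr_ge0].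
    by apply: (lt_le_trans ltr01); rewrite lerDr.
  move=> mu1 g1 g2 mu2 h1 h2 [Lm1 [Lg1 Lg2] _ _ _] [Lm2 [Lh1 Lh2] _ _ _] _.
  pose Fg := fun x => phi beta (g1 x) + phi beta (g2 x).
  pose Fh := fun x => phi beta (h1 x) + phi beta (h2 x).
  pose a := fun x => `|(g1 \- h1) x| + `|(g2 \- h2) x|.
  pose q := fun x => `|(g1 \- h1) x| ^+ 2 + `|(g2 \- h2) x| ^+ 2 + `|(mu1 \- mu2) x| ^+ 2.
  have LFg : Linfty Omega Fg := LinftyD (Lphi _ Lg1) (Lphi _ Lg2).
  have LFh : Linfty Omega Fh := LinftyD (Lphi _ Lh1) (Lphi _ Lh2).
  have La : Linfty Omega a :=
    LinftyD (Linfty_norm (LinftyB Lg1 Lh1)) (Linfty_norm (LinftyB Lg2 Lh2)).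
  have Lq : Linfty Omega q := LinftyD (LinftyD (Linfty_sq (LinftyB Lg1 Lh1))
     (Linfty_sq (LinftyB Lg2 Lh2))) (Linfty_sq (LinftyB Lm1 Lm2)).
  pose I := Rintegral (leb2 R) Omega q.
  have nE : normX Omega (mu1 \- mu2) (g1 \- h1) (g2 \- h2) = Num.sqrt I by [].
  have step1 : `|Rfun Omega lambda beta g1 g2 - Rfun Omega lambda beta h1 h2|
      <= lambda * (beta^-1 * Rintegral (leb2 R) Omega a).
    rewrite !RE -mulrBr normrM (gtr0_norm l0) ler_pM2l //.
    rewrite -(RintegralB mO (Int _ LFg) (Int _ LFh)).
    apply: le_trans; first exact: (le_normr_Rintegral mO (Int _ (LinftyB LFg LFh))).
    rewrite -(RintegralZl _ mO (Int _ La)).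
    apply: le_Rintegral => //.
    + exact: (Int _ (Linfty_norm (LinftyB LFg LFh))).
    + exact: (Int _ (LinftyM (Linfty_cst _ _) La)).
    + move=> x _; rewrite /Fg /Fh /a /=.
      have := phi_lip (g1 x) (h1 x) b0; have := phi_lip (g2 x) (h2 x) b0.
      rewrite opprD addrACA mulrDr => H2 H1.
      by apply: le_trans (ler_normD _ _) _; apply: lerD.
  have step2 : Rintegral (leb2 R) Omega a <= 2 * Num.sqrt I * Num.sqrt (S + 1).
    have S1 : 0 < S + 1 by lra.
    apply: key; [exact: sqrtr_ge0 | by rewrite sqrtr_gt0 |].
    have I0 : 0 <= I.
      by apply: Rintegral_ge0 => x _; rewrite /q; apply: addr_ge0; [apply: addr_ge0|]; exact: sqr_ge0.
    move=> t t0; rewrite (sqr_sqrtr I0) (sqr_sqrtr (ltW S1)).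
    apply: (@le_trans _ _ (Rintegral (leb2 R) Omega (fun x => t * q x + t^-1))).
      apply: le_Rintegral => //.
      * exact: (Int _ La).
      * exact: (Int _ (LinftyD (LinftyM (Linfty_cst _ t) Lq) (Linfty_cst _ t^-1))).
      * by move=> x _; exact: amgm.
    rewrite (RintegralD mO (Int _ (LinftyM (Linfty_cst _ t) Lq)) (Int _ (Linfty_cst _ t^-1))).
    rewrite (RintegralZl _ mO (Int _ Lq)) Rintegral_cst // -/S -/I.
    rewrite lerD2l mulrC ler_wpM2r ?invr_ge0 ?ltW //; lra.
  rewrite nE; apply: le_trans step1 _.
  rewrite mulrDl mul1r -[X in X <= _]addr0 lerD ?sqrtr_ge0 //.
  rewrite -!mulrA ler_pM2l // ler_pM2l ?invr_gt0 //.
  by rewrite (le_trans step2) // -mulrA [Num.sqrt I * _]mulrC.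
Qed.
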